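(* Let $D$ be a locatable digraph of order $n$, and let $D'$ be the spanning subdigraph of $D$ whose arcs are exactly the forcing arcs of $D$. Then $\gamma_{OL}(D)=n$ if and only if $D'$ is a disjoint union of directed cycles covering all vertices of $D$ (i.e. every vertex of $D$ lies on exactly one of these cycles, and the arcs of $D'$ are exactly the arcs of these cycles).
   Context: Digraphs are finite and may contain loops; between two distinct vertices there may be arcs in one or both directions, no repeated arcs. A directed cycle may have length 1 (a loop) or 2 (arcs $uv$ and $vu$). $N^-(v)=\{u: uv\text{ is an arc}\}$ (contains $v$ iff $v$ has a loop). An OLD set of $D$ is a set $S\subseteq V(D)$ such that every vertex has an in-neighbour in $S$ and for every two distinct vertices $u,w$ some vertex of $S$ lies in exactly one of $N^-(u),N^-(w)$. $D$ is locatable if it has an OLD set, and then $\gamma_{OL}(D)$ is the minimum size of an OLD set. An arc $xy$ (possibly a loop) of $D$ is a forcing arc if either $N^-(y)=\{x\}$, or there is a vertex $z$ with $N^-(z)=N^-(y)\setminus\{x\}$. *)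

(* Defs.v *)
(* A digraph on a finite vertex type T is an arc relation
   e : rel T ("e u v" means the arc uv exists); loops (e v v) are allowed,
   arcs in both directions are allowed, repeated arcs cannot occur. *)
From mathcomp Require Import all_boot all_order all_fingroup.
Set Implicit Arguments.
Unset Strict Implicit.
Unset Printing Implicit Defensive.

Section Digraph.
Variable T : finType.
Variable e : rel T.

Definition inN (v : T) : {set T} := [set u | e u v].

Definition OLD (S : {set T}) : bool :=
  [forall v : T, exists u in S, u \in inN v] &&
  [forall u : T, forall w : T, (u != w) ==>
     [exists x in S, (x \in inN u) != (x \in inN w)]].

Definition locatable : Prop := exists S : {set T}, OLD S.

(* gamma_OL: minimum size of an OLD set (default #|T|.+1 if none exists;
   only used under the locatability hypothesis). *)
Definition gammaOL : nat :=
  \big[minn/#|T|.+1]_(S : {set T} | OLD S) #|S|.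

Definition forcing (x y : T) : bool :=
  e x y &&
  ((inN y == [set x]) || [exists z, inN z == inN y :\ x]).

End Digraph.

(* Main.v *)
Require Import Defs.
From mathcomp Require Import all_boot all_order all_fingroup.
From mathcomp Require Import zify.

Set Implicit Arguments.
Unset Strict Implicit.
Unset Printing Implicit Defensive.

Section Proofs.
Variable T : finType.
Variable e : rel T.

Lemma mem_inN u v : (u \in inN e v) = e u v.
Proof. by rewrite /inN inE. Qed.

Lemma OLD_sub (S S' : {set T}) : S \subset S' -> OLD e S -> OLD e S'.
Proof.
move=> sub /andP[/forallP H1 /forallP H2]; apply/andP; split; apply/forallP.
- move=> v; have/existsP[u /andP[uS uv]] := H1 v; apply/existsP; exists u.
  by rewrite (subsetP sub) .
- move=> u; apply/forallP => w; apply/implyP => uw.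
  have/existsP[z /andP[zS zd]] := implyP ((forallP (H2 u)) w) uw.
  by apply/existsP; exists z; rewrite (subsetP sub _ zS) zd.
Qed.

Lemma OLD_dom S v : OLD e S -> exists2 u, u \in S & u \in inN e v.
Proof.
move=> /andP[/forallP H1 _]; have/existsP[u /andP[uS uv]] := H1 v.
by exists u.
Qed.

Lemma OLD_sep S u w : OLD e S -> u != w ->
  exists2 z, z \in S & (z \in inN e u) != (z \in inN e w).
Proof.
move=> /andP[_ /forallP H2] uw.
have/existsP[z /andP[zS zd]] := implyP ((forallP (H2 u)) w) uw.
by exists z.
Qed.

Lemma gamma_le S : OLD e S -> gammaOL e <= #|S|.
Proof.
move=> HS; rewrite /gammaOL.
have : S \in index_enum {set T} by rewrite mem_index_enum.
elim: (index_enum _) => [//|a l IH]; rewrite big_cons inE => /orP[/eqP <-|Sl].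
  by rewrite HS geq_minl.
case: (OLD e a); last exact: IH.
by apply: leq_trans (geq_minr _ _) (IH Sl).
Qed.

Lemma gamma_ge n : (forall S, OLD e S -> n <= #|S|) -> n <= #|T|.+1 ->
  n <= gammaOL e.
Proof.
move=> H Hn; rewrite /gammaOL; apply: (big_ind (fun m => n <= m)) => //.
by move=> a b Ha Hb; rewrite leq_min Ha Hb.
Qed.

Lemma forcing_notOLD x y : forcing e x y -> ~~ OLD e (~: [set x]).
Proof.
move=> /andP[exy /orP[/eqP Hy | /existsP[z /eqP Hz]]]; apply/negP => Hold.
- by case: (OLD_dom y Hold) => u; rewrite Hy in_setC in_set1 => /negbTE ->.
- have xy : x \in inN e y by rewrite mem_inN.
  have zy : z != y.
    apply/eqP => Ezy; move: Hz; rewrite Ezy => Hz.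
    by move: xy; rewrite Hz in_setD1 eqxx.
  case: (OLD_sep Hold zy) => w; rewrite Hz in_setC in_set1 => wx.
  by rewrite in_setD1 wx /= eqxx.
Qed.

Lemma helper_sep x a b : x \in inN e a -> x \notin inN e b ->
  ~~ forcing e x a -> exists2 z, z != x & (z \in inN e a) != (z \in inN e b).
Proof.
move=> xa xb Hn.
case: (boolP [exists z, (z \in inN e b) != (z \in inN e a :\ x)]) =>
   [/existsP[z Hz] | Hno].
- exists z.
    by apply/eqP => zx; move: Hz; rewrite zx (negbTE xb) in_setD1 eqxx.
  have zx : z != x.
    by apply/eqP => zx; move: Hz; rewrite zx (negbTE xb) in_setD1 eqxx.
  by move: Hz; rewrite in_setD1 zx /= eq_sym.
- case/negP: Hn; rewrite /forcing -mem_inN xa /=; apply/orP; right.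
  apply/existsP; exists b; apply/eqP/setP => z.
  move: Hno; rewrite negb_exists => /forallP /(_ z); rewrite negbK => /eqP.
  done.
Qed.

Lemma old_rm x : OLD e setT -> (forall y, ~~ forcing e x y) ->
  OLD e (~: [set x]).
Proof.
move=> HT Hn; apply/andP; split; apply/forallP.
- move=> v; case: (OLD_dom v HT) => u _ uv; apply/existsP.
  case: (eqVneq u x) => [ux|ux]; last first.
    by exists u; rewrite in_setC in_set1 ux uv.
  subst u.
  have : inN e v :\ x != set0.
    apply/negP => /eqP H0; have := Hn v; rewrite /forcing -mem_inN uv /=.
    suff -> : inN e v == [set x] by [].
    apply/eqP/setP => z; rewrite in_set1; case: (eqVneq z x) => [->|zx].
      by [].
    have : z \notin inN e v :\ x by rewrite H0 in_set0.
    by rewrite in_setD1 zx /= => /negbTE.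
  case/set0Pn => w; rewrite in_setD1 => /andP[wx wv].
  by exists w; rewrite in_setC in_set1 wx wv.
- move=> u; apply/forallP => w; apply/implyP => uw.
  case: (OLD_sep HT uw) => z _ zd.
  case: (eqVneq z x) => [zx|zx]; last first.
    by apply/existsP; exists z; rewrite in_setC in_set1 zx zd.
  subst z.
  case xu: (x \in inN e u); move: zd; rewrite xu => zd.
  + have xw : x \notin inN e w by case: (x \in inN e w) zd.
    case: (helper_sep xu xw (Hn u)) => z zx zd'.
    by apply/existsP; exists z; rewrite in_setC in_set1 zx zd'.
  + have xw : x \in inN e w by case: (x \in inN e w) zd.
    case: (helper_sep xw (negbT xu) (Hn w)) => z zx zd'.
    by apply/existsP; exists z; rewrite in_setC in_set1 zx eq_sym zd'.
Qed.

Definition Nset : {set {set T}} := set0 |: [set inN e v | v in T].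
Definition r (L : {set T}) := #|[set B :\: L | B in Nset]|.
Definition edge x := [exists B in Nset, (x \in B) && (B :\ x \in Nset)].

Lemma imset_subD1 (A B : finType) (f : A -> B) (S : {set A}) a b :
  a \in S -> a != b -> f a = f b -> f @: S \subset f @: (S :\ b).
Proof.
move=> aS ab fab; apply/subsetP => _ /imsetP[y yS ->].
case: (eqVneq y b) => [->|yb].
  by rewrite -fab; apply: imset_f; rewrite in_setD1 ab aS.
by apply: imset_f; rewrite in_setD1 yb yS.
Qed.

Lemma collapse (A B : finType) (f : A -> B) (S : {set A}) a b :
  a \in S -> b \in S -> a != b -> f a = f b -> #|f @: S| < #|S|.
Proof.
move=> aS bS ab fab.
apply: leq_ltn_trans (subset_leq_card (imset_subD1 aS ab fab)) _.
apply: leq_ltn_trans (leq_imset_card _ _) _.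
by rewrite [X in _ < X](cardsD1 b S) bS.
Qed.

Lemma step (L : {set T}) x : x \notin L -> edge x -> r (x |: L) < r L.
Proof.
move=> xL /existsP[B /andP[BN /andP[xB BxN]]].
rewrite /r.
have -> : [set B0 :\: (x |: L) | B0 in Nset] =
          [set (fun C => C :\ x) C | C in [set B0 :\: L | B0 in Nset]].
  rewrite -imset_comp; apply: eq_imset => C /=; apply/setP => z.
  by rewrite !inE; case: (z == x); case: (z \in L).
apply: (@collapse _ _ (fun C => C :\ x) _ (B :\: L) ((B :\ x) :\: L)).
- exact: imset_f.
- exact: imset_f.
- apply/eqP => /setP /(_ x); rewrite !inE eqxx xB (negbTE xL) /=.
  done.
- by apply/setP => z; rewrite !inE; case: (z == x).
Qed.

Lemma chain k : forall L M : {set T}, L \subset M -> #|M :\: L| = k ->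
  (forall x, x \in M :\: L -> edge x) -> r M + k <= r L.
Proof.
elim: k => [|k IH] L M LM Hk He.
  have : M :\: L = set0 by apply: cards0_eq.
  move/eqP; rewrite setD_eq0 => ML.
  have -> : M = L by apply/eqP; rewrite eqEsubset ML LM.
  by rewrite addn0.
have : 0 < #|M :\: L| by rewrite Hk.
rewrite card_gt0 => /set0Pn[x xML].
have xM : x \in M by move: xML; rewrite inE => /andP[].
have xL : x \notin L by move: xML; rewrite inE => /andP[].
have LM' : L \subset M :\ x.
  apply/subsetP => z zL; rewrite in_setD1 (subsetP LM _ zL) andbT.
  by apply/eqP => zx; move: xL; rewrite -zx zL.
have Hk' : #|(M :\ x) :\: L| = k.
  have E : (M :\ x) :\: L = (M :\: L) :\ x.
    by apply/setP => z; rewrite !inE; case: (z == x); rewrite /= ?andbF ?andbT.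
  by move: Hk; rewrite E (cardsD1 x (M :\: L)) xML add1n => [[]].
have He' : forall z, z \in (M :\ x) :\: L -> edge z.
  by move=> z; rewrite !inE => /andP[zL /andP[_ zM]]; apply: He; rewrite inE zL zM.
have := IH L (M :\ x) LM' Hk' He'.
have xM' : x \notin M :\ x by rewrite in_setD1 eqxx.
have st := step xM' (He x xML).
rewrite setD1K // in st.
by move=> H; rewrite addnS; apply: leq_trans H; rewrite ltn_add2r.
Qed.

Hypothesis HT : OLD e setT.

Lemma inN_neq0 v : inN e v != set0.
Proof. by case: (OLD_dom v HT) => u _ uv; apply/set0Pn; exists u. Qed.

Lemma inN_inj : injective (inN e).
Proof.
move=> u w E; apply/eqP; apply/negP => /negP uw.
by case: (OLD_sep HT uw) => z _; rewrite E eqxx.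
Qed.

Lemma set0_N : set0 \in Nset.
Proof. by rewrite /Nset in_setU1 eqxx. Qed.

Lemma inN_N v : inN e v \in Nset.
Proof. by rewrite /Nset in_setU1 imset_f ?orbT. Qed.

Lemma r0 : r set0 = #|T|.+1.
Proof.
rewrite /r (eq_imset (g := id)); last by move=> B; rewrite setD0.
rewrite imset_id /Nset cardsU1 card_imset; last exact: inN_inj.
suff -> : set0 \notin [set inN e v | v in T] by rewrite cardT.
by apply/imsetP => [[v _ /esym/eqP]]; rewrite (negbTE (inN_neq0 v)).
Qed.

Lemma rT_pos : 0 < r setT.
Proof. by rewrite /r card_gt0; apply/set0Pn; exists (set0 :\: setT); apply: imset_f; exact: set0_N. Qed.

Lemma forcing_info x y : forcing e x y ->
  x \in inN e y /\ inN e y :\ x \in Nset.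
Proof.
move=> /andP[exy /orP[/eqP Hy | /existsP[z /eqP Hz]]]; rewrite mem_inN exy;
  split => //.
- have -> : inN e y :\ x = set0 by rewrite Hy setDv.
  exact: set0_N.
- by rewrite -Hz; exact: inN_N.
Qed.

Lemma forcing_edge x y : forcing e x y -> edge x.
Proof.
move=> /forcing_info[xy yN]; apply/existsP; exists (inN e y).
by rewrite inN_N xy yN.
Qed.

Hypothesis Hedge : forall x, edge x.

Lemma out_uniq x y1 y2 : forcing e x y1 -> forcing e x y2 -> y1 = y2.
Proof.
move=> /forcing_info[x1 C1N] /forcing_info[x2 C2N].
apply/eqP; apply/negP => /negP y12.
set B1 := inN e y1 in x1 C1N; set B2 := inN e y2 in x2 C2N.
set C1 := B1 :\ x in C1N; set C2 := B2 :\ x in C2N.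
have xC1 : x \notin C1 by rewrite in_setD1 eqxx.
have xC2 : x \notin C2 by rewrite in_setD1 eqxx.
set f := fun B : {set T} => B :\: [set x].
have fE B : f (B :\ x) = f B.
  by apply/setP => z; rewrite /f !inE; case: (z == x).
have B1C1 : B1 != C1 by apply/eqP => E; move: xC1; rewrite -E x1.
have B2C2 : B2 != C2 by apply/eqP => E; move: xC2; rewrite -E x2.
have B2C1 : B2 != C1 by apply/eqP => E; move: xC1; rewrite -E x2.
have C2C1 : C2 != C1.
  apply/eqP => E; move/negP: y12; apply; apply/eqP/inN_inj.
  by rewrite -/B1 -/B2 -(setD1K x1) -(setD1K x2) -/C1 -/C2 E.
have sub := imset_subD1 (f := f) (inN_N y1) B1C1 (esym (fE B1)).
have lt : #|f @: (Nset :\ C1)| < #|Nset :\ C1|.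
  apply: (collapse (a := B2) (b := C2)).
  - by rewrite in_setD1 B2C1 inN_N.
  - by rewrite in_setD1 C2C1 C2N.
  - exact: B2C2.
  - by rewrite /C2 fE.
have rx : r [set x] < #|T|.
  have cN : #|Nset| = #|T|.+1 by rewrite -r0 /r (eq_imset (g := id)) ?imset_id // => B; rewrite setD0.
  have := subset_leq_card sub; rewrite -/(r [set x]) => H1.
  have : #|Nset :\ C1| = #|T|.
    by move: cN; rewrite (cardsD1 C1 Nset) C1N add1n => [[]].
  move=> H2; rewrite H2 in lt.
  exact: leq_ltn_trans H1 lt.
have := chain (L := [set x]) (M := setT) (subsetT _) (erefl _) (fun z _ => Hedge z).
rewrite setTD cardsC1 => H.
have := rT_pos.
have : 0 < #|T| by apply/card_gt0P; exists x.
lia.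
Qed.

Lemma in_uniq x1 x2 y : forcing e x1 y -> forcing e x2 y -> x1 = x2.
Proof.
move=> /forcing_info[x1A A1N] /forcing_info[x2A A2N].
apply/eqP; apply/negP => /negP x12.
set A := inN e y in x1A x2A A1N A2N.
set M := ~: [set x1; x2].
have := chain (L := set0) (M := M) (sub0set _) (erefl _) (fun z _ => Hedge z).
rewrite r0 setD0.
have cM : #|M| = #|T| - 2.
  by have := cardsC [set x1; x2]; rewrite cards2 x12 /M; lia.
have T2 : 2 <= #|T|.
  have := subset_leq_card (subsetT [set x1; x2]).
  by rewrite cards2 x12 cardsT.
have r4 : 4 <= r M.
  set img := [set B :\: M | B in Nset].
  set j := fun C : {set T} => (x1 \in C, x2 \in C).
  have sub : [set: bool * bool] \subset j @: img.
    have hM z : (z \in M) = ~~ ((z == x1) || (z == x2)).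
      by rewrite /M !inE.
    have e12 : (x1 == x2) = false by apply/negbTE.
    have e21 : (x2 == x1) = false by rewrite eq_sym; apply/negbTE.
    apply/subsetP => -[[] []] _; apply/imsetP.
    - exists (A :\: M); first by apply: imset_f; rewrite inN_N.
      by rewrite /j !in_setD !hM !negbK !eqxx ?e12 ?e21 /= ?orbT x1A x2A.
    - exists ((A :\ x2) :\: M); first by apply: imset_f.
      by rewrite /j !in_setD !in_set1 !hM !negbK !eqxx ?e12 ?e21 /= ?orbT x1A.
    - exists ((A :\ x1) :\: M); first by apply: imset_f.
      by rewrite /j !in_setD !in_set1 !hM !negbK !eqxx ?e12 ?e21 /= ?orbT x2A.
    - exists (set0 :\: M); first by apply: imset_f; exact: set0_N.
      by rewrite /j !in_setD !in_set0 !andbF.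
  have := subset_leq_card sub; rewrite cardsT card_prod card_bool => H.
  exact: leq_trans H (leq_imset_card _ _).
lia.
Qed.

End Proofs.

Theorem theorem12 (T : finType) (e : rel T) :
  locatable e ->
  (gammaOL e = #|T| <->
   exists s : {perm T}, forall x y : T, forcing e x y = (y == s x)).
Proof.
move=> [S0 HS0].
have HT : OLD e setT by apply: OLD_sub HS0; apply: subsetT.
split.
- move=> Hg.
  have Hex : forall x, exists y, forcing e x y.
    move=> x; case: (boolP [exists y, forcing e x y]) => [/existsP//|].
    rewrite negb_exists => /forallP Hn.
    have := gamma_le (old_rm HT Hn); rewrite Hg cardsC1.
    have : 0 < #|T| by apply/card_gt0P; exists x.
    lia.
  have Hedge : forall x, edge e x.
    by move=> x; case: (Hex x) => y; apply: forcing_edge.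
  pose f x := odflt x [pick y | forcing e x y].
  have fP x : forcing e x (f x).
    rewrite /f; case: pickP => [y //|H]; case: (Hex x) => y.
    by rewrite H.
  have finj : injective f.
    by move=> a b E; apply: (in_uniq HT Hedge (fP a)); rewrite E fP.
  exists (perm finj) => x y; rewrite permE.
  apply/idP/eqP => [H|->]; last exact: fP.
  exact: (out_uniq HT Hedge H (fP x)).
- move=> [s Hs]; apply/eqP; rewrite eqn_leq; apply/andP; split; first by rewrite -cardsT; apply: gamma_le.
  apply: gamma_ge => //; move=> S HS.
  rewrite -cardsT; apply: subset_leq_card; apply/subsetP => x _.
  apply/negPn/negP => xS.
  have := forcing_notOLD (e := e) (x := x) (y := s x); rewrite Hs eqxx => /(_ isT).
  move/negP; apply; apply: OLD_sub HS.
  by apply/subsetP => z zS; rewrite in_setC in_set1; apply/eqP => zx; move: xS; rewrite -zx zS.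
Qed.
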